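(* For $Y\in\mathfrak o(V,K)$ and $y\in V$ let $\mu_{Y,y}\in\mathfrak g^*$ be the functional $Z\mapsto\langle (Y,y^* )\,|\,Z\rangle$ on $\mathfrak g$. Then the assignment $(Y,y)\mapsto\mu_{Y,y}$ induces a well-defined bijection from the set of special cotypes (equivalence classes of special tuples) onto the set of coadjoint orbits of $G$ in $\mathfrak g^*$; that is: every element of $\mathfrak g^*$ is of the form $\mu_{Y,y}$, and two special tuples $(Y,y)$, $(Y',y')$ are equivalent if and only if $\mu_{Y,y}$ and $\mu_{Y',y'}$ lie in the same $G$-coadjoint orbit, where $G$ acts on $\mathfrak g^*$ by $(g\cdot\mu)(Z)=\mu(g^{-1}Zg)$.
   Context: Let $n\ge 0$ be an integer and let $\widetilde K$ be a real symmetric $n\times n$ matrix with $\widetilde K^2=I_n$. Let $V=\mathbb R^{n+2}$ with standard basis $e_1,\dots,e_{n+2}$, and let $K=\begin{pmatrix}0&0&1\\0&\widetilde K&0\\1&0&0\end{pmatrix}$ (block sizes $1,n,1$). For $x,w\in V$ write $x^*=x^TK$ (a row vector) and $L_{u,w}=u\,w^*-w\,u^*$. Let $O(V,K)=\{P:P^TKP=K\}$, $\mathfrak o(V,K)=\{X:X^TK+KX=0\}$, and $O(V,K)_{e_{n+2}}=\{P\in O(V,K):Pe_{n+2}=e_{n+2}\}$. Let $\mathfrak g^\vee$ be the space of $(n+3)\times(n+3)$ matrices $(X,x^* ):=\begin{pmatrix}0&x^*\\0&X\end{pmatrix}$ with $X\in\mathfrak o(V,K)$, $x\in V$, with bilinear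 form $\langle (X,x^* )\,|\,(\overline X,\overline x^{\,*})\rangle=\tfrac12\mathrm{tr}(X\overline X)+\overline x^{\,T}Kx$. Let $G$ be the group (generalized Galilei group) of matrices $\begin{pmatrix}1&p^*\\0&P\end{pmatrix}$ with $P\in O(V,K)_{e_{n+2}}$ and $p\in V$ with $p^*(e_{n+2})=0$, and let $\mathfrak g$ be its Lie algebra, the matrices $(X,x^* )\in\mathfrak g^\vee$ with $Xe_{n+2}=0$ and $x^*(e_{n+2})=0$. A special tuple is a pair $(Y,y)$ (written $(V,Y,y;K)$ in the paper) with $Y\in\mathfrak o(V,K)$, $y\in V$. Two special tuples $(Y,y)$ and $(Y',y')$ are equivalent if there exist $P\in O(V,K)_{e_{n+2}}$, vectors $v,p\in V$ with $p^*(e_{n+2})=0$, and $v_0\in\mathbb R$ such that $Y'+L_{v,e_{n+2}}=P(Y+L_{p,y})P^{-1}$ and $y'=Py+v_0e_{n+2}$. A special cotype is an equivalence class of special tuples. *)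

(* Defs.v *)
From HB Require Import structures.
From mathcomp Require Import all_boot all_order all_algebra.
From mathcomp Require Import reals.
Set Implicit Arguments. Unset Strict Implicit. Unset Printing Implicit Defensive.
Import Order.TTheory GRing.Theory Num.Theory.
Local Open Scope ring_scope.

Section Galilei.
Context {R : realType} {n : nat} (Kt : 'M[R]_n).

(* index i of 'I_(n.+2) (0-based) lies in the middle block: i = 1..n, giving i-1 : 'I_n *)
Definition mid_index (i : nat) : option 'I_n :=
  if (0 < i)%N then insub i.-1 else None.

(* K = [[0,0,1],[0,Kt,0],[1,0,0]] with block sizes 1,n,1 *)
Definition Kmat : 'M[R]_(n.+2) :=
  \matrix_(i, j)
    (if ((i == 0%N :> nat) && (j == n.+1 :> nat)) ||
        ((i == n.+1 :> nat) && (j == 0%N :> nat)) then 1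
     else match mid_index i, mid_index j with
          | Some a, Some b => Kt a b
          | _, _ => 0
          end).

Definition elast : 'cV[R]_(n.+2) := delta_mx ord_max 0.

Definition star (x : 'cV[R]_(n.+2)) : 'rV[R]_(n.+2) := x^T *m Kmat.

Definition Lmx (u w : 'cV[R]_(n.+2)) : 'M[R]_(n.+2) :=
  u *m star w - w *m star u.

Definition inO (P : 'M[R]_(n.+2)) : Prop := P^T *m Kmat *m P = Kmat.
Definition ino (X : 'M[R]_(n.+2)) : Prop := X^T *m Kmat + Kmat *m X = 0.
Definition inOe (P : 'M[R]_(n.+2)) : Prop := inO P /\ P *m elast = elast.

Definition gvee_mx (X : 'M[R]_(n.+2)) (xs : 'rV[R]_(n.+2)) : 'M[R]_(1 + n.+2) :=
  block_mx (0 : 'M_1) xs 0 X.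

Definition in_g (Z : 'M[R]_(1 + n.+2)) : Prop :=
  exists (X : 'M[R]_(n.+2)) (x : 'cV[R]_(n.+2)),
    [/\ ino X, X *m elast = 0, star x *m elast = 0 & Z = gvee_mx X (star x)].

Definition in_G (g : 'M[R]_(1 + n.+2)) : Prop :=
  exists (P : 'M[R]_(n.+2)) (p : 'cV[R]_(n.+2)),
    [/\ inOe P, star p *m elast = 0 & g = block_mx (1 : 'M_1) (star p) 0 P].

(* elements of g^*: functions which are linear on g (only their values on g matter) *)
Definition gdual (phi : 'M[R]_(1 + n.+2) -> R) : Prop :=
  forall (a : R) (Z1 Z2 : 'M[R]_(1 + n.+2)), in_g Z1 -> in_g Z2 ->
    phi (a *: Z1 + Z2) = a * phi Z1 + phi Z2.

(* mu_{Y,y}(Z) = < (Y, y^* ) | Z > for Z = (Xb, xb^* ):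
   = 1/2 tr(Y Xb) + xb^T K y = 1/2 tr(Y Xb) + xb^* y,
   where Xb = drsubmx Z and xb^* = ursubmx Z. *)
Definition mu (Y : 'M[R]_(n.+2)) (y : 'cV[R]_(n.+2)) (Z : 'M[R]_(1 + n.+2)) : R :=
  2^-1 * \tr (Y *m drsubmx Z) + (ursubmx Z *m y) 0 0.

Definition equiv_tuple (Y : 'M[R]_(n.+2)) (y : 'cV[R]_(n.+2))
    (Y' : 'M[R]_(n.+2)) (y' : 'cV[R]_(n.+2)) : Prop :=
  exists (P : 'M[R]_(n.+2)) (v p : 'cV[R]_(n.+2)) (v0 : R),
    [/\ inOe P, star p *m elast = 0,
        Y' + Lmx v elast = P *m (Y + Lmx p y) *m invmx P
      & y' = P *m y + v0 *: elast].

Definition same_coadj_orbit (m m' : 'M[R]_(1 + n.+2) -> R) : Prop :=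
  exists g : 'M[R]_(1 + n.+2), in_G g /\
    forall Z, in_g Z -> m' Z = m (invmx g *m Z *m g).

End Galilei.

(* Main.v *)
Require Import Defs.
From HB Require Import structures.
From mathcomp Require Import all_boot all_order all_algebra.
From mathcomp Require Import reals.
From mathcomp Require Import ring lra.
Set Implicit Arguments. Unset Strict Implicit. Unset Printing Implicit Defensive.
Import Order.TTheory GRing.Theory Num.Theory.
Local Open Scope ring_scope.

Section KFacts.
Variables (R : realType) (n : nat) (Kt : 'M[R]_n).
Hypotheses (Ksym : Kt^T = Kt) (Kinv : Kt *m Kt = 1%:M).

Local Notation K := (Kmat Kt).
Local Notation e := (@elast R n).
Definition e1 : 'cV[R]_(n.+2) := delta_mx 0 0.

Definition mid (a : 'I_n) : 'I_(n.+2) := @Ordinal (n.+2) a.+1 (ltnW (ltn_ord a)).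

Variant idx_spec : 'I_(n.+2) -> Type :=
 | IdxFirst : idx_spec ord0
 | IdxMid a : idx_spec (mid a)
 | IdxLast : idx_spec ord_max.

Lemma idxP i : idx_spec i.
Proof.
case: i => [[|k] Hk].
  have -> : Ordinal Hk = ord0 by apply: val_inj.
  exact: IdxFirst.
case: (ltnP k n) => Hkn.
  have -> : Ordinal Hk = mid (Ordinal Hkn) by apply: val_inj.
  exact: IdxMid.
have Hkn' : k = n by move: Hk; rewrite ltnS ltnS => H; apply/eqP; rewrite eqn_leq H Hkn.
have -> : Ordinal Hk = ord_max by apply: val_inj; rewrite /= Hkn'.
exact: IdxLast.
Qed.

Lemma mid_indexK a : @mid_index n (mid a) = Some a.
Proof. by rewrite /mid_index /= valK. Qed.
Lemma mid_index0 : @mid_index n (@ord0 n.+1) = None.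
Proof. by []. Qed.
Lemma mid_indexmax : @mid_index n (@ord_max n.+1) = None.
Proof. by rewrite /mid_index /= insubF // ltnn. Qed.

Lemma mid_neq0 a : (mid a == n.+1 :> nat) = false.
Proof. by rewrite /= eqSS ltn_eqF. Qed.

Lemma K00 : K ord0 ord0 = 0. Proof. by rewrite mxE /= ?mid_neq0 ?mid_indexK ?mid_indexmax ?mid_index0 ?eqxx ?andbF. Qed.
Lemma K0m a : K ord0 (mid a) = 0. Proof. by rewrite mxE /= ?mid_neq0 ?mid_indexK ?mid_indexmax ?mid_index0 ?eqxx ?andbF. Qed.
Lemma K0M : K ord0 ord_max = 1. Proof. by rewrite mxE /= ?mid_neq0 ?mid_indexK ?mid_indexmax ?mid_index0 ?eqxx ?andbF. Qed.
Lemma Km0 a : K (mid a) ord0 = 0. Proof. by rewrite mxE /= ?mid_neq0 ?mid_indexK ?mid_indexmax ?mid_index0 ?eqxx ?andbF. Qed.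
Lemma Kmm a b : K (mid a) (mid b) = Kt a b. Proof. by rewrite mxE /= ?mid_neq0 ?mid_indexK ?mid_indexmax ?mid_index0 ?eqxx ?andbF. Qed.
Lemma KmM a : K (mid a) ord_max = 0. Proof. by rewrite mxE /= ?mid_neq0 ?mid_indexK ?mid_indexmax ?mid_index0 ?eqxx ?andbF. Qed.
Lemma KM0 : K ord_max ord0 = 1. Proof. by rewrite mxE /= ?mid_neq0 ?mid_indexK ?mid_indexmax ?mid_index0 ?eqxx ?andbF. Qed.
Lemma KMm a : K ord_max (mid a) = 0. Proof. by rewrite mxE /= ?mid_neq0 ?mid_indexK ?mid_indexmax ?mid_index0 ?eqxx ?andbF. Qed.
Lemma KMM : K ord_max ord_max = 0. Proof. by rewrite mxE /= ?mid_neq0 ?mid_indexK ?mid_indexmax ?mid_index0 ?eqxx ?andbF. Qed.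

Definition Kent := (K00, K0m, K0M, Km0, Kmm, KmM, KM0, KMm, KMM).

Lemma sum_split (F : 'I_(n.+2) -> R) :
  \sum_(k < n.+2) F k = F ord0 + \sum_(a < n) F (mid a) + F ord_max.
Proof.
rewrite big_ord_recl big_ord_recr /= addrA; congr (_ + _ + _).
  by apply: eq_bigr => a _; congr F; apply: val_inj.
by congr F; apply: val_inj.
Qed.

Lemma KT : K^T = K.
Proof.
apply/matrixP => i j; rewrite mxE.
case: (idxP i) => [|a|]; case: (idxP j) => [|b|]; rewrite ?Kent //.
by rewrite -{1}Ksym mxE.
Qed.

Lemma mid_inj : injective mid.
Proof. by move=> a b /(congr1 val) /= [] /val_inj. Qed.

Lemma KK : K *m K = 1%:M.
Proof.
apply/matrixP => i j; rewrite !mxE sum_split.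
case: (idxP i) => [|a|]; case: (idxP j) => [|b|]; rewrite ?Kent /=.
all: rewrite ?mul0r ?mulr0 ?mul1r ?add0r ?addr0.
all: under eq_bigr => k _ do rewrite ?Kent ?mul0r ?mulr0.
all: rewrite ?big1_eq ?addr0 ?add0r ?eqxx //.
- have := Kinv; move/matrixP/(_ a b); rewrite !mxE => <-.
  done.
- by rewrite -(inj_eq val_inj) /= eqSS ltn_eqF.
- by rewrite -(inj_eq val_inj) /= eqSS eq_sym ltn_eqF.
Qed.

Lemma Ke : K *m e = e1.
Proof.
rewrite /elast -colE; apply/matrixP => i j; rewrite (ord1 j) [LHS]mxE [RHS]mxE.
by case: (idxP i) => *; rewrite ?Kent.
Qed.

Lemma Ke1 : K *m e1 = e.
Proof. by rewrite -Ke mulmxA KK mul1mx. Qed.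


Local Notation L := (Lmx Kt).
Local Notation N := n.+2.

Lemma KTm : (K : 'M[R]_N)^T = K. Proof. exact: KT. Qed.

Lemma trL u w : (L u w)^T = K *m w *m u^T - K *m u *m w^T.
Proof.
by rewrite /Lmx /star raddfB /= !trmx_mul !trmxK KT.
Qed.

Lemma ino_L u w : ino Kt (L u w).
Proof.
rewrite /ino trL /Lmx /star mulmxBl mulmxBr !mulmxA.
by rewrite addrC addrA subrK subrr.
Qed.

Lemma ino_asym X : ino Kt X -> X^T *m K = - (K *m X).
Proof. by rewrite /ino => /eqP; rewrite addr_eq0 => /eqP. Qed.

Lemma ino0 : ino Kt 0.
Proof. by rewrite /ino trmx0 mul0mx mulmx0 addr0. Qed.

Lemma inoD A B : ino Kt A -> ino Kt B -> ino Kt (A + B).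
Proof.
rewrite /ino => HA HB; rewrite raddfD /= mulmxDl mulmxDr.
by rewrite addrACA HA HB addr0.
Qed.

Lemma inoN A : ino Kt A -> ino Kt (- A).
Proof.
rewrite /ino => HA; rewrite raddfN /= mulNmx mulmxN -opprD HA oppr0 //.
Qed.

Lemma inoB A B : ino Kt A -> ino Kt B -> ino Kt (A - B).
Proof. by move=> HA HB; apply: inoD => //; apply: inoN. Qed.

Lemma inoZ a A : ino Kt A -> ino Kt (a *: A).
Proof.
rewrite /ino => HA; rewrite linearZ /= -scalemxAl -scalemxAr -scalerDr HA scaler0 //.
Qed.

Lemma tr_rank1 (u : 'cV[R]_N) (r : 'rV[R]_N) : \tr (u *m r) = (r *m u) 0 0.
Proof. by rewrite mxtrace_mulC /mxtrace big_ord1. Qed.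

Lemma trLX u w X : ino Kt X ->
  \tr (L u w *m X) = - ((u^T *m K *m X *m w) 0 0 *+ 2).
Proof.
move=> HX; rewrite /Lmx /star mulmxBl raddfB /= -!mulmxA !tr_rank1 !mulmxA.
have -> : (w^T *m K *m X *m u) 0 0 = - (u^T *m K *m X *m w) 0 0.
  have -> : (w^T *m K *m X *m u) 0 0 = ((w^T *m K *m X *m u)^T) 0 0 by rewrite [RHS]mxE.
  rewrite !trmx_mul trmxK KT !mulmxA -(mulmxA u^T X^T K) (ino_asym HX) mulmxN mulNmx.
  by rewrite [LHS]mxE !mulmxA.
by rewrite mulr2n opprD.
Qed.

Lemma KKl m (A : 'M[R]_(N, m)) : K *m (K *m A) = A.
Proof. by rewrite mulmxA KK mul1mx. Qed.
Lemma KKr m (A : 'M[R]_(m, N)) : A *m K *m K = A.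
Proof. by rewrite -mulmxA KK mulmx1. Qed.

Lemma inv_uniq m (A B : 'M[R]_m) : A *m B = 1%:M -> invmx A = B.
Proof.
move=> H; have [uA _] := mulmx1_unit H.
by rewrite -[invmx A]mulmx1 -H mulmxA mulVmx // mul1mx.
Qed.

Lemma inO_inv P : inO Kt P -> P *m (K *m P^T *m K) = 1%:M.
Proof.
rewrite /inO => HP; apply: mulmx1C.
by rewrite -!mulmxA (mulmxA P^T) HP KK.
Qed.

Lemma inO_invmx P : inO Kt P -> invmx P = K *m P^T *m K.
Proof. by move=> HP; apply: inv_uniq; apply: inO_inv. Qed.

Lemma inO_unit P : inO Kt P -> P \in unitmx.
Proof. by move=> HP; have [] := mulmx1_unit (inO_inv HP). Qed.

Lemma ino_conj1 P X : inO Kt P -> ino Kt X -> ino Kt (invmx P *m X *m P).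
Proof.
move=> HP HX; rewrite /ino inO_invmx //.
have -> : (K *m P^T *m K *m X *m P)^T *m K + K *m (K *m P^T *m K *m X *m P)
   = P^T *m (X^T *m K + K *m X) *m P.
  rewrite !trmx_mul !trmxK !KT mulmxDr mulmxDl -!mulmxA !KKl KK mulmx1 //.
by rewrite HX mulmx0 mul0mx.
Qed.

Lemma ino_conj2 P X : inO Kt P -> ino Kt X -> ino Kt (P *m X *m invmx P).
Proof.
move=> HP HX; rewrite /ino inO_invmx //.
have -> : (P *m X *m (K *m P^T *m K))^T *m K + K *m (P *m X *m (K *m P^T *m K))
   = K *m P *m K *m (X^T *m K + K *m X) *m K *m P^T *m K.
  rewrite !trmx_mul !trmxK !KT mulmxDr mulmxDl -!mulmxA !KKl KK mulmx1 //.
  rewrite mulmxDl -!mulmxA //.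
by rewrite (HX : X^T *m K + K *m X = 0) mulmx0 !mul0mx.
Qed.

Lemma mu_gvee (Y : 'M[R]_N) (y : 'cV[R]_N) (X : 'M[R]_N) (xs : 'rV[R]_N) : mu Y y (gvee_mx X xs) = 2^-1 * \tr (Y *m X) + (xs *m y) 0 0.
Proof. by rewrite /mu /gvee_mx block_mxKdr block_mxKur. Qed.

Lemma invg P (sp : 'rV[R]_N) : inO Kt P ->
  invmx (block_mx (1 : 'M_1) sp 0 P) = block_mx (1 : 'M_1) (- sp *m invmx P) 0 (invmx P).
Proof.
move=> HP; apply: inv_uniq; rewrite mulmx_block.
rewrite !mul0mx !mulmx0 !addr0 add0r mulmxV ?inO_unit //.
have -> : (1 : 'M[R]_1) = 1%:M by [].
by rewrite !mul1mx mulNmx addNr -scalar_mx_block.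
Qed.

Lemma conj_gvee (P : 'M[R]_N) p X (xs : 'rV[R]_N) : inO Kt P ->
  invmx (block_mx (1 : 'M_1) (star Kt p) 0 P) *m gvee_mx X xs *m block_mx (1 : 'M_1) (star Kt p) 0 P
  = gvee_mx (invmx P *m X *m P) (xs *m P - star Kt p *m invmx P *m X *m P).
Proof.
move=> HP; rewrite invg // /gvee_mx !mulmx_block.
have -> : (1 : 'M[R]_1) = 1%:M by [].
rewrite !(mul0mx, mulmx0, addr0, add0r, mul1mx, mulmx1).
rewrite mulmxDl mulNmx. congr block_mx. by rewrite !mulNmx.
Qed.

Lemma mxE_sub m k (A B : 'M[R]_(m, k)) i j : (A - B) i j = A i j - B i j.
Proof. by rewrite !mxE. Qed.
Lemma mxE_add m k (A B : 'M[R]_(m, k)) i j : (A + B) i j = A i j + B i j.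
Proof. by rewrite !mxE. Qed.

Lemma mu_conj (Y : 'M[R]_N) (y : 'cV[R]_N) P p X (x : 'cV[R]_N) : inO Kt P -> ino Kt X ->
  mu Y y (invmx (block_mx (1 : 'M_1) (star Kt p) 0 P) *m gvee_mx X (star Kt x)
            *m block_mx (1 : 'M_1) (star Kt p) 0 P)
  = mu (P *m (Y + L p y) *m invmx P) (P *m y) (gvee_mx X (star Kt x)).
Proof.
move=> HP HX; rewrite conj_gvee // !mu_gvee.
have HW := ino_conj1 HP HX.
have -> : \tr (P *m (Y + L p y) *m invmx P *m X)
   = \tr (Y *m (invmx P *m X *m P)) + \tr (L p y *m (invmx P *m X *m P)).
  rewrite -!mulmxA mxtrace_mulC !mulmxDl mxtraceD -!mulmxA.
  by congr (_ + _); rewrite mxtrace_mulC -!mulmxA.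
rewrite trLX // mulmxBl mxE_sub /star.
have -> : (p^T *m K *m invmx P *m X *m P *m y) 0 0
   = (p^T *m K *m (invmx P *m X *m P) *m y) 0 0 by rewrite !mulmxA.
rewrite !mulmxA.
set a := \tr _; set b := (_ *m y) 0 0; set c := (_ *m y) 0 0.
rewrite mulr2n.
have E : forall a b c : R, 2^-1 * a + (c - b) = 2^-1 * (a - (b + b)) + c by move=> *; field.
exact: E.
Qed.

Lemma e1E i j : e1 i j = (i == ord0)%:R.
Proof. by rewrite mxE (ord1 j) eqxx andbT. Qed.

Lemma star_e x : star Kt x *m e = x^T *m e1.
Proof. by rewrite /star -mulmxA Ke. Qed.

Lemma delta_e1 (i : 'I_N) : i != ord0 -> (delta_mx i 0 : 'cV[R]_N)^T *m e1 = 0.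
Proof. by move=> Hi; rewrite trmx_delta mul_delta_mx_cond (negbTE Hi) mulr0n. Qed.

Lemma x_e1 (x : 'cV[R]_N) : (x^T *m e1) 0 0 = x 0 0.
Proof. by rewrite /e1 -colE !mxE. Qed.

Lemma ent (A : 'M[R]_N) i j : ((delta_mx i 0 : 'cV[R]_N)^T *m A *m (delta_mx j 0 : 'cV[R]_N)) 0 0 = A i j.
Proof. by rewrite trmx_delta -rowE -colE !mxE. Qed.

Lemma T1 (d : 'cV[R]_N) :
  (forall i, i != ord0 -> (star Kt (delta_mx i 0) *m d) 0 0 = 0) -> d = (K *m d) 0 0 *: e.
Proof.
move=> H.
have HK : K *m d = (K *m d) 0 0 *: e1.
  apply/matrixP => i j; rewrite (ord1 j) [RHS]mxE.
  case: (i =P ord0) => [->|/eqP Hi]; first by rewrite e1E eqxx mulr1.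
  have := H i Hi; rewrite /star trmx_delta -mulmxA -rowE mxE => ->.
  by rewrite e1E (negbTE Hi) mulr0.
by rewrite -[LHS]KKl {1}HK -scalemxAr Ke1.
Qed.

Lemma decomp (A : 'M[R]_N) : A 0 0 = 0 -> (forall i j, i != 0 -> j != 0 -> A i j = 0) ->
  A = e1 *m (e1^T *m A) + A *m e1 *m e1^T.
Proof.
move=> H0 H; rewrite /e1 trmx_delta -rowE -colE.
apply/matrixP => i j; rewrite !mxE !big_ord1 !mxE.
case: (i =P 0) => [->|/eqP Hi]; case: (j =P 0) => [->|/eqP Hj].
all: have E0 : (ord0 == 0 :> 'I_N) by [].
all: rewrite ?H0 ?E0 ?eqxx ?(negbTE Hi) ?(negbTE Hj) /= ?mul1r ?mul0r ?mulr0 ?mulr1 ?addr0 ?add0r //.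
by rewrite H.
Qed.

Lemma T2 (D : 'M[R]_N) : ino Kt D ->
  (forall i j, i != ord0 -> j != ord0 -> \tr (L (delta_mx i 0) (delta_mx j 0) *m D) = 0) ->
  D = L (D *m e1) e.
Proof.
move=> HD H.
have z2 : forall z : R, - (z *+ 2) = 0 -> z = 0 by move=> z; rewrite mulr2n => Hz; lra.
have HA : forall i j, i != 0 -> j != 0 -> (K *m D) i j = 0.
  move=> i j Hi Hj; have := H i j Hi Hj; rewrite trLX // => /z2.
  by rewrite -ent !mulmxA.
have HA0 : (K *m D) 0 0 = 0.
  have : (K *m D)^T 0 0 = - (K *m D) 0 0 by rewrite trmx_mul KT (ino_asym HD) mxE.
  rewrite mxE => Hz; lra.
have Hdec := decomp HA0 HA.
have -> : L (D *m e1) e = D *m e1 *m e1^T + e *m (e1^T *m (K *m D)).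
  have h1 : e^T *m K = e1^T by rewrite -Ke trmx_mul KT.
  have h2 : (D *m e1)^T *m K = - (e1^T *m (K *m D)).
    by rewrite trmx_mul -mulmxA (ino_asym HD) mulmxN.
  by rewrite /Lmx /star h1 h2 mulmxN opprK.
rewrite -[LHS]KKl {1}Hdec mulmxDr !mulmxA Ke1 KK mul1mx.
by rewrite addrC.
Qed.

Definition islin p q (F : 'M[R]_N -> 'M[R]_(p, q)) := forall a X Y, F (a *: X + Y) = a *: F X + F Y.

Lemma islin_id : islin (@id 'M[R]_N). Proof. by []. Qed.
Lemma islin_tr p q (F : 'M[R]_N -> 'M[R]_(p, q)) : islin F -> islin (fun X => (F X)^T).
Proof. by move=> HF a X Y; rewrite /= HF linearP. Qed.
Lemma islin_mull p q r (C : 'M[R]_(r, p)) (F : 'M[R]_N -> 'M[R]_(p, q)) : islin F -> islin (fun X => C *m F X).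
Proof. by move=> HF a X Y; rewrite /= HF mulmxDr scalemxAr. Qed.
Lemma islin_mulr p q r (C : 'M[R]_(q, r)) (F : 'M[R]_N -> 'M[R]_(p, q)) : islin F -> islin (fun X => F X *m C).
Proof. by move=> HF a X Y; rewrite /= HF mulmxDl scalemxAl. Qed.
Lemma islin_add p q (F G : 'M[R]_N -> 'M[R]_(p, q)) : islin F -> islin G -> islin (fun X => F X + G X).
Proof. by move=> HF HG a X Y; rewrite /= HF HG scalerDr addrACA. Qed.
Lemma islin_opp p q (F : 'M[R]_N -> 'M[R]_(p, q)) : islin F -> islin (fun X => - F X).
Proof. by move=> HF a X Y; rewrite /= HF opprD scalerN. Qed.
Lemma islin_scale p q c (F : 'M[R]_N -> 'M[R]_(p, q)) : islin F -> islin (fun X => c *: F X).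
Proof. by move=> HF a X Y; rewrite /= HF scalerDr !scalerA mulrC. Qed.

Definition sig (X : 'M[R]_N) := 2^-1 *: (X - K *m X^T *m K).
Definition pim (X : 'M[R]_N) := sig X - L (sig X *m e) e1.

Lemma islin_sig : islin sig.
Proof.
apply: islin_scale; apply: islin_add; first exact: islin_id.
exact: (islin_opp (islin_mulr K (islin_mull K (islin_tr islin_id)))).
Qed.

Lemma pimE X : pim X = sig X - sig X *m e *m e^T + e1 *m e^T *m (sig X)^T *m K.
Proof.
rewrite /pim /Lmx /star.
have -> : e1^T *m K = e^T by rewrite -Ke1 trmx_mul KT.
by rewrite opprB addrA trmx_mul !mulmxA addrAC.
Qed.

Lemma islin_pim : islin pim.
Proof.
move=> a X Y; rewrite !pimE.
have H : islin (fun X => sig X + - (sig X *m e *m e^T) + e1 *m e^T *m (sig X)^T *m K).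
  apply: islin_add; first apply: islin_add.
  - exact: islin_sig.
  - exact: (islin_opp (islin_mulr e^T (islin_mulr e islin_sig))).
  - exact: (islin_mulr K (islin_mull (e1 *m e^T) (islin_tr islin_sig))).
exact: H.
Qed.

Lemma ino_sig X : ino Kt (sig X).
Proof.
apply: inoZ; rewrite /ino raddfB /= !trmx_mul trmxK KT mulmxBl mulmxBr.
rewrite -!mulmxA KK mulmx1 KKl.
by rewrite addrA subrK subrr.
Qed.

Lemma sig_id X : ino Kt X -> sig X = X.
Proof.
move=> HX; rewrite /sig -mulmxA (ino_asym HX) mulmxN KKl opprK.
by rewrite -[X in X + X]scale1r -scalerDl scalerA mulVf ?scale1r // pnatr_eq0.
Qed.

Lemma ino_pim X : ino Kt (pim X).
Proof. by apply: inoB; [apply: ino_sig | apply: ino_L]. Qed.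

Lemma tr1 (s : 'M[R]_1) : s^T = s.
Proof. by apply/matrixP => i j; rewrite (ord1 i) (ord1 j) mxE. Qed.

Lemma o_quad M : ino Kt M -> (M *m e)^T *m e1 = 0.
Proof.
move=> HM.
set s := e^T *m (K *m M) *m e.
have E1 : (M *m e)^T *m e1 = - s.
  by rewrite /s -Ke trmx_mul -!mulmxA (mulmxA M^T) (ino_asym HM) mulNmx mulmxN !mulmxA.
have E2 : ((M *m e)^T *m e1)^T = s.
  by rewrite /s -Ke !trmx_mul !trmxK KT !mulmxA.
have Hs : s = - s by rewrite -{1}E2 tr1 E1.
rewrite E1; apply/matrixP => i j; rewrite (ord1 i) (ord1 j) [LHS]mxE [RHS]mxE.
move/matrixP/(_ 0 0): Hs; rewrite [RHS]mxE => Hs; lra.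
Qed.

Lemma pim_e X : pim X *m e = 0.
Proof.
rewrite /pim mulmxBl /Lmx /star mulmxBl -!mulmxA.
have h1 : e1^T *m (K *m e) = 1%:M.
  by rewrite Ke /e1 trmx_delta mul_delta_mx; apply/matrixP => i j; rewrite (ord1 i) (ord1 j) !mxE.
have h2 : (sig X *m e)^T *m (K *m e) = 0 by rewrite Ke; apply: o_quad; apply: ino_sig.
by rewrite h1 h2 mulmx1 mulmx0 subr0 subrr.
Qed.

Lemma pim_id X : ino Kt X -> X *m e = 0 -> pim X = X.
Proof.
move=> HX He; rewrite /pim sig_id // He /Lmx /star trmx0 !mul0mx mulmx0 subrr subr0.
done.
Qed.

Lemma scE m k a (M : 'M[R]_(m, k)) i j : (a *: M) i j = a * M i j.
Proof. by rewrite mxE. Qed.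

Lemma rep m k (f : 'M[R]_(m, k) -> R) :
  (forall a X Y, f (a *: X + Y) = a * f X + f Y) ->
  forall X, f X = \sum_i \sum_j X i j * f (delta_mx i j).
Proof.
move=> Hf.
have f0 : f 0 = 0.
  have := Hf 1 0 0; rewrite scale1r addr0 mul1r => H.
  by move: H; set z := f 0 => H; lra.
have fs : forall c X, f (c *: X) = c * f X.
  by move=> c X; rewrite -[c *: X]addr0 Hf f0 addr0.
have fsum : forall (I : Type) (r : seq I) (G : I -> 'M[R]_(m, k)),
    f (\sum_(i <- r) G i) = \sum_(i <- r) f (G i).
  move=> I r G; elim: r => [|a r IH]; first by rewrite !big_nil f0.
  by rewrite !big_cons -[G a]scale1r Hf mul1r IH scale1r.
move=> X; rewrite {1}(matrix_sum_delta X) fsum.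
apply: eq_bigr => i _; rewrite fsum; apply: eq_bigr => j _; exact: fs.
Qed.

Lemma sig_tr A X : ino Kt X -> \tr (sig A *m X) = \tr (A *m X).
Proof.
move=> HX; rewrite /sig -scalemxAl mxtraceZ mulmxBl raddfB /=.
have -> : \tr (K *m A^T *m K *m X) = - \tr (A *m X).
  rewrite -!mulmxA mxtrace_mulC -mxtrace_tr !trmx_mul !trmxK KT -!mulmxA.
  rewrite mxtrace_mulC -!mulmxA (mulmxA X^T) (ino_asym HX) mulNmx raddfN /=.
  by rewrite mxtrace_mulC -!mulmxA KKl.
rewrite opprK; set t := \tr _.
have E : forall t : R, 2^-1 * (t + t) = t by move=> *; field.
exact: E.
Qed.

Lemma gvee_in_g X x : ino Kt X -> X *m e = 0 -> star Kt x *m e = 0 -> in_g Kt (gvee_mx X (star Kt x)).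
Proof. by move=> *; exists X, x. Qed.

Lemma star0 : star Kt (0 : 'cV[R]_N) = 0.
Proof. by rewrite /star trmx0 mul0mx. Qed.

Lemma part1 (phi : 'M[R]_(1 + N) -> R) : gdual Kt phi ->
  exists (Y : 'M[R]_N) (y : 'cV[R]_N), ino Kt Y /\ forall Z, in_g Kt Z -> phi Z = mu Y y Z.
Proof.
move=> Hphi.
pose f X := phi (gvee_mx (pim X) 0).
have gX : forall X, in_g Kt (gvee_mx (pim X) 0).
  by move=> X; rewrite -star0; apply: gvee_in_g; [apply: ino_pim | apply: pim_e | rewrite star0 mul0mx].
have flin : forall a X Y, f (a *: X + Y) = a * f X + f Y.
  move=> a X Y; rewrite /f islin_pim -Hphi //; congr phi.
  by rewrite /gvee_mx scale_block_mx add_block_mx !scaler0 !addr0.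
pose Pi (x : 'cV[R]_N) := x - x 0 0 *: e1.
have Pi0 : forall x, star Kt (Pi x) *m e = 0.
  move=> x; rewrite star_e; apply/matrixP => i j; rewrite (ord1 i) (ord1 j) x_e1 mxE_sub.
  by rewrite scE e1E eqxx mulr1 subrr [RHS]mxE.
pose h x := phi (gvee_mx 0 (star Kt (Pi x))).
have gx : forall x, in_g Kt (gvee_mx 0 (star Kt (Pi x))).
  by move=> x; apply: gvee_in_g; [apply: ino0 | rewrite mul0mx | apply: Pi0].
have hlin : forall a x y, h (a *: x + y) = a * h x + h y.
  move=> a x y; rewrite /h -Hphi //; congr phi.
  rewrite /gvee_mx scale_block_mx add_block_mx !scaler0 !addr0; congr block_mx.
  have PiL : Pi (a *: x + y) = a *: Pi x + Pi y.
    by rewrite /Pi mxE_add scE scalerDl -scalerA scalerBr opprD addrACA.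
  by rewrite PiL /star linearP /= mulmxDl scalemxAl.
pose A := \matrix_(i, j) f (delta_mx j i).
have fA : forall X, f X = \tr (A *m X).
  move=> X; rewrite (rep flin) /mxtrace exchange_big /=.
  apply: eq_bigr => i _; rewrite mxE; apply: eq_bigr => j _; rewrite mxE mulrC.
  done.
pose c := \col_i h (delta_mx i 0).
exists (2%:R *: sig A), (K *m c); split; first by apply: inoZ; apply: ino_sig.
move=> Z [X [x [HX HXe Hxe ->]]].
have Hx0 : x 0 0 = 0.
  by move: Hxe; rewrite star_e => /matrixP/(_ 0 0); rewrite x_e1 mxE.
rewrite mu_gvee.
have -> : gvee_mx X (star Kt x) = 1 *: gvee_mx (pim X) 0 + gvee_mx 0 (star Kt (Pi x)).
  rewrite pim_id // /Pi Hx0 scale0r subr0 scale1r /gvee_mx add_block_mx !addr0 add0r.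
  done.
rewrite Hphi // mul1r -/(f X) -/(h x) fA -scalemxAl mxtraceZ sig_tr //.
congr (_ + _).
  have E : forall t : R, t = 2^-1 * (2%:R * t) by move=> *; field.
  exact: E.
rewrite (rep hlin) /star -!mulmxA KKl mxE.
apply: eq_bigr => i _; rewrite big_ord1 !mxE.
done.
Qed.


Lemma Le0 (i j : 'I_N) : i != ord0 -> j != ord0 ->
  L (delta_mx i 0) (delta_mx j 0) *m e = 0.
Proof.
move=> Hi Hj; rewrite /Lmx /star mulmxBl -!mulmxA Ke !delta_e1 //.
by rewrite !mulmx0 subrr.
Qed.

Lemma part2 (Y Y' : 'M[R]_N) (y y' : 'cV[R]_N) : ino Kt Y -> ino Kt Y' ->
  (equiv_tuple Kt Y y Y' y' <-> same_coadj_orbit Kt (mu Y y) (mu Y' y')).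
Proof.
move=> HY HY'; split.
  move=> [P [v [p [v0 [[HP HPe] Hp HYe Hy]]]]].
  exists (block_mx (1 : 'M_1) (star Kt p) 0 P); split; first by exists P, p.
  move=> Z [X [x [HX HXe Hxe ->]]].
  rewrite mu_conj // !mu_gvee -HYe Hy mulmxDl mxtraceD trLX //.
  have z00 : (0 : 'M[R]_1) 0 0 = 0 by rewrite mxE.
  rewrite -(mulmxA _ X e) HXe mulmx0 z00 mul0rn subr0.
  by rewrite mulmxDr -scalemxAr Hxe scaler0 addr0.
move=> [g [[P [p [[HP HPe] Hp ->]]] Hmu]].
set Y'' := P *m (Y + L p y) *m invmx P.
have Hmu' : forall X x, ino Kt X -> X *m e = 0 -> star Kt x *m e = 0 ->
    mu Y' y' (gvee_mx X (star Kt x)) = mu Y'' (P *m y) (gvee_mx X (star Kt x)).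
  by move=> X x HX HXe Hxe; rewrite -mu_conj //; apply: Hmu; exists X, x.
set D := Y'' - Y'.
have HDo : ino Kt D by apply: inoB => //; apply: ino_conj2 => //; apply: inoD => //; apply: ino_L.
have HD : D = L (D *m e1) e.
  apply: T2 => // i j Hi Hj.
  have := Hmu' _ 0 (ino_L (delta_mx i 0) (delta_mx j 0)) (Le0 Hi Hj).
  rewrite star0 mul0mx => /(_ erefl); rewrite !mu_gvee !mul0mx => H.
  rewrite mxtrace_mulC /D mulmxBl raddfB /=.
  move: H; set t1 := \tr (Y' *m _); set t2 := \tr (Y'' *m _) => H.
  have E : forall a b z : R, 2^-1 * a + z = 2^-1 * b + z -> b - a = 0 by move=> a b z Hz; lra.
  exact: E H.
exists P, (D *m e1), p, ((K *m (y' - P *m y)) 0 0); split => //.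
  by rewrite -HD /D addrC subrK.
have Hd := @T1 (y' - P *m y).
rewrite -Hd; first by rewrite addrC subrK.
move=> i Hi.
have := Hmu' 0 (delta_mx i 0) ino0 (mul0mx _ _).
rewrite star_e delta_e1 // => /(_ erefl); rewrite !mu_gvee !mulmx0 => H.
rewrite mulmxBr mxE_sub.
move: H; set t1 := (_ *m y') 0 0; set t2 := (_ *m (P *m y)) 0 0 => H.
have E : forall a b z : R, z + a = z + b -> a - b = 0 by move=> a b z Hz; lra.
exact: E H.
Qed.

End KFacts.

Unset Implicit Arguments.
Set Strict Implicit.

Theorem proposition4 (R : realType) (n : nat) (Kt : 'M[R]_n)
    (Ksym : Kt^T = Kt) (Kinv : Kt *m Kt = 1%:M) :
  (forall phi : 'M[R]_(1 + n.+2) -> R, gdual Kt phi ->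
     exists (Y : 'M[R]_(n.+2)) (y : 'cV[R]_(n.+2)),
       ino Kt Y /\ forall Z, in_g Kt Z -> phi Z = mu Y y Z)
  /\
  (forall (Y Y' : 'M[R]_(n.+2)) (y y' : 'cV[R]_(n.+2)),
     ino Kt Y -> ino Kt Y' ->
     (equiv_tuple Kt Y y Y' y' <->
      same_coadj_orbit Kt (mu Y y) (mu Y' y'))).
Proof.
split; first exact: part1.
exact: part2.
Qed.
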